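(* Let $X\neq\{0\}$ be a real normed space and let $\mathcal{G}\subset C(\mathbb{R})$ be fundamental in $C(\mathbb{R})$. Let $\mathcal{F}\subset X^*$ be such that $\{f/\|f\|: f\in\mathcal{F},\ f\neq0\}$ is dense in the unit sphere $\{f\in X^*:\|f\|=1\}$ with respect to the operator norm. Then $\mathcal{G}\circ\mathcal{F}=\{g\circ f: g\in\mathcal{G},\ f\in\mathcal{F}\}$ is fundamental in $C(X)$.
   Context: $X^*$ is the space of bounded linear functionals on $X$ with the operator norm $\|f\|=\sup_{\|x\|\le1}|f(x)|$. For a normed space $Y$, a subset $S\subset C(Y)$ (continuous real functions on $Y$) is called fundamental if its linear span is dense in $C(Y)$ in the sense of uniform convergence on compact sets: for every compact $K\subset Y$, every $h\in C(Y)$ and every $\varepsilon>0$ there is $s$ in the span of $S$ with $\sup_{x\in K}|h(x)-s(x)|<\varepsilon$. *)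

(* Defs.v *)
From HB Require Import structures.
From mathcomp Require Import all_boot all_order all_algebra.
From mathcomp Require Import all_classical all_reals all_analysis.
Set Implicit Arguments. Unset Strict Implicit. Unset Printing Implicit Defensive.
Import Order.TTheory GRing.Theory Num.Theory.
Import numFieldNormedType.Exports.
Local Open Scope classical_set_scope.
Local Open Scope ring_scope.

Definition in_span (R : realType) (Y : Type) (S : set (Y -> R)) (s : Y -> R) :=
  exists (n : nat) (c : 'I_n -> R) (g : 'I_n -> Y -> R),
    (forall i, S (g i)) /\ s = (fun y => \sum_(i < n) c i * g i y).

(* S is a subset of C(Y) whose span is dense for uniform convergence on
   compact sets: sup_{x in K} |h x - s x| < eps is written as
   "exists d < eps bounding |h x - s x| on K". *)
Definition fundamental (R : realType) (Y : topologicalType) (S : set (Y -> R)) :=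
  (forall s, S s -> continuous s) /\
  forall (K : set Y) (h : Y -> R) (eps : R),
    compact K -> continuous h -> 0 < eps ->
    exists s, in_span S s /\
      exists d, d < eps /\ forall x, K x -> `|h x - s x| <= d.

Definition is_dual (R : realType) (X : normedModType R) (f : X -> R) :=
  (forall (a : R) (x y : X), f (a *: x + y) = a * f x + f y) /\
  exists M : R, forall x, `|f x| <= M * `|x|.

Definition opnorm (R : realType) (X : normedModType R) (f : X -> R) : R :=
  sup [set `|f x| | x in [set x : X | `|x| <= 1]].

(* Main.v *)
Require Import Defs.
From HB Require Import structures.
From mathcomp Require Import all_boot all_order all_algebra.
From mathcomp Require Import all_classical all_reals all_analysis.
From mathcomp Require Import ring lra finmap.
Import Order.TTheory GRing.Theory Num.Theory.
Import numFieldNormedType.Exports.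
Local Open Scope classical_set_scope.
Local Open Scope ring_scope.
Set Implicit Arguments. Unset Strict Implicit. Unset Printing Implicit Defensive.

Section Dual.
Variables (R : realType) (X : normedModType R).
Implicit Types (f g : X -> R).

Lemma dual0 f : is_dual f -> f 0 = 0.
Proof.
move=> [lf _]; have := lf 1 0 0; rewrite scaler0 addr0 mul1r => h; lra.
Qed.

Lemma dualZ f a x : is_dual f -> f (a *: x) = a * f x.
Proof. move=> fd; have := fd.1 a x 0; rewrite addr0 dual0 // addr0 //. Qed.

Lemma dualD f x y : is_dual f -> f (x + y) = f x + f y.
Proof. by move=> fd; have := fd.1 1 x y; rewrite scale1r mul1r. Qed.

Lemma dualN f x : is_dual f -> f (- x) = - f x.
Proof. by move=> fd; rewrite -scaleN1r dualZ // mulN1r. Qed.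

Lemma dualB f x y : is_dual f -> f (x - y) = f x - f y.
Proof. by move=> fd; rewrite dualD // dualN. Qed.

Lemma dual_bound f : is_dual f -> exists M, 0 < M /\ forall x, `|f x| <= M * `|x|.
Proof.
move=> [_ [M HM]]; exists (`|M| + 1); split; first by rewrite ltr_wpDl.
move=> x; apply: (le_trans (HM x)); apply: ler_wpM2r => //.
by rewrite (le_trans (ler_norm M)) // lerDl.
Qed.

Lemma dual_cont f : is_dual f -> continuous f.
Proof.
move=> fd x; have [M [M0 HM]] := dual_bound fd.
apply/cvgrPdist_lt => e e0.
have : \forall y \near x, `|x - y| < e / M.
  by apply: (@cvgr_dist_lt _ _ _ (nbhs x) _ id); [exact: cvg_id | rewrite divr_gt0].
apply: filterS => y Hy; rewrite -dualB //.
apply: (le_lt_trans (HM _)); by rewrite mulrC -ltr_pdivlMr.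
Qed.

Lemma dual_comb f g a b : is_dual f -> is_dual g ->
  is_dual (fun x => a * f x + b * g x).
Proof.
move=> fd gd; split.
  by move=> c x y; rewrite dualD // dualD // !dualZ //; ring.
have [M [M0 HM]] := dual_bound fd; have [N [N0 HN]] := dual_bound gd.
exists (`|a| * M + `|b| * N) => x.
rewrite (le_trans (ler_normD _ _)) // !normrM mulrDl -!mulrA.
by rewrite lerD // ler_wpM2l.
Qed.

Lemma opnorm_ub f x : is_dual f -> `|x| <= 1 -> `|f x| <= opnorm f.
Proof.
move=> fd x1; have [M [M0 HM]] := dual_bound fd.
apply: ub_le_sup; last by exists x.
exists M => _ [y y1 <-]; apply: (le_trans (HM y)).
by rewrite -[leRHS]mulr1 ler_wpM2l // ltW.
Qed.

Lemma opnorm_ge0 f : is_dual f -> 0 <= opnorm f.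
Proof. by move=> fd; rewrite (le_trans _ (opnorm_ub (x:=0) fd _)) // normr0. Qed.

Lemma opnorm_le f M : (forall x, `|x| <= 1 -> `|f x| <= M) -> opnorm f <= M.
Proof.
move=> HM; apply: ge_sup; first by exists `|f 0|, 0 => //=; rewrite normr0.
by move=> _ [y y1 <-]; exact: HM.
Qed.

Lemma opnorm_bound f x : is_dual f -> `|f x| <= opnorm f * `|x|.
Proof.
move=> fd; have [->|x0] := eqVneq x 0; first by rewrite dual0 // !normr0 mulr0.
have nx : 0 < `|x| by rewrite normr_gt0.
have := opnorm_ub (x := `|x|^-1 *: x) fd.
rewrite normrZ normrV ?unitfE ?normr_eq0 // normr_id mulVf ?normr_eq0 //.
rewrite dualZ // normrM normrV ?unitfE ?normr_eq0 // normr_id.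
move=> /(_ (lexx _)); rewrite ler_pdivrMl // => h.
by rewrite mulrC.
Qed.

End Dual.

Section HB.
Variables (R : realType) (X : normedModType R).

Definition subsp (S : set X) := S 0 /\ forall a x y, S x -> S y -> S (a *: x + y).
Definition good (S : set X) (f : X -> R) := subsp S /\
  (forall a x y, S x -> S y -> f (a *: x + y) = a * f x + f y) /\
  (forall x, S x -> f x <= `|x|).

Lemma subspZ S a x : subsp S -> S x -> S (a *: x).
Proof. by move=> [S0 SS] Sx; rewrite -[_ *: x]addr0; apply: SS. Qed.
Lemma subspD S x y : subsp S -> S x -> S y -> S (x + y).
Proof. by move=> [S0 SS] Sx Sy; rewrite -[x]scale1r; apply: SS. Qed.
Lemma subspB S x y : subsp S -> S x -> S y -> S (x - y).
Proof. by move=> sS Sx Sy; rewrite -scaleN1r addrC; apply: sS.2. Qed.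

Lemma good0 S f : good S f -> f 0 = 0.
Proof.
move=> [[S0 _] [lf _]]; have := lf 1 0 0 S0 S0.
rewrite scaler0 addr0 mul1r => h; lra.
Qed.
Lemma goodZ S f a x : good S f -> S x -> f (a *: x) = a * f x.
Proof.
move=> g Sx; have := g.2.1 a x 0 Sx g.1.1; by rewrite addr0 (good0 g) addr0.
Qed.
Lemma goodD S f x y : good S f -> S x -> S y -> f (x + y) = f x + f y.
Proof. by move=> g Sx Sy; have := g.2.1 1 x y Sx Sy; rewrite scale1r mul1r. Qed.

Lemma ext_c S f z : good S f -> exists c,
  (forall s, S s -> f s + c <= `|s + z|) /\ (forall s, S s -> f s - c <= `|s - z|).
Proof.
move=> g; pose E := [set f s - `|s - z| | s in S].
have E0 : E !=set0 by exists (f 0 - `|0 - z|), 0 => //; exact: g.1.1.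
have ub s2 : S s2 -> ubound E (`|s2 + z| - f s2).
  move=> S2 _ [s1 S1 <-].
  have h1 := g.2.2 _ (subspD g.1 S1 S2).
  rewrite (goodD g S1 S2) in h1.
  have h2 : `|s1 + s2| <= `|s1 - z| + `|s2 + z|.
    by have := ler_normD (s1 - z) (s2 + z); rewrite [s2 + z]addrC addrA subrK.
  lra.
exists (sup E); split.
  move=> s Ss; have := ge_sup E0 (ub s Ss); lra.
move=> s Ss; have : E (f s - `|s - z|) by exists s.
move=> /(ub_le_sup (ex_intro _ _ (ub 0 g.1.1))); lra.
Qed.

Lemma dec_uniq S z s1 s2 t1 t2 : subsp S -> ~ S z -> S s1 -> S s2 ->
  s1 + t1 *: z = s2 + t2 *: z -> s1 = s2 /\ t1 = t2.
Proof.
move=> sS nz S1 S2 e.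
have tt : t1 = t2.
  have [//|ne] := eqVneq t1 t2; exfalso; apply: nz.
  have : S ((t1 - t2)^-1 *: (s2 - s1)) by apply: subspZ => //; apply: subspB.
  suff -> : (t1 - t2)^-1 *: (s2 - s1) = z by [].
  have -> : s2 - s1 = (t1 - t2) *: z.
    by rewrite scalerBl -[s2](addrK (t2 *: z)) -e addrAC [s1 + _]addrC addrK.
  by rewrite scalerA mulVf ?scale1r // subr_eq0.
by split => //; move: e; rewrite tt => /addIr.
Qed.

Lemma ext1 S f z c : good S f -> ~ S z ->
  (forall s, S s -> f s + c <= `|s + z|) -> (forall s, S s -> f s - c <= `|s - z|) ->
  exists S' f', [/\ good S' f', S `<=` S', (forall x, S x -> f' x = f x), S' z & f' z = c].
Proof.
move=> g nz hp hm.
pose S' := [set x | exists s t, S s /\ x = s + t *: z].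
pose dec x := xget (0, 0) [set p : X * R | S p.1 /\ x = p.1 + p.2 *: z].
pose f' x := f (dec x).1 + (dec x).2 * c.
have decE s t : S s -> dec (s + t *: z) = (s, t).
  move=> Ss; have [] : [set p : X * R | S p.1 /\ s + t *: z = p.1 + p.2 *: z] (dec (s + t *: z)).
    by apply: xgetPex; exists (s, t).
  case: (dec _) => s' t' /= Ss' e.
  by have [-> ->] := dec_uniq g.1 nz Ss Ss' e.
have f'E s t : S s -> f' (s + t *: z) = f s + t * c by move=> Ss; rewrite /f' decE.
exists S', f'; split.
- split; [split|split].
  + by exists 0, 0; split; [exact: g.1.1|rewrite scale0r addr0].
  + move=> a _ _ [s1 [t1 [S1 ->]]] [s2 [t2 [S2 ->]]].
    exists (a *: s1 + s2), (a * t1 + t2); split; first exact: g.1.2.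
    by rewrite scalerDr scalerDl scalerA; rewrite -!addrA; congr (_ + _);
       rewrite addrCA.
  + move=> a _ _ [s1 [t1 [S1 ->]]] [s2 [t2 [S2 ->]]].
    have -> : a *: (s1 + t1 *: z) + (s2 + t2 *: z) = (a *: s1 + s2) + (a * t1 + t2) *: z.
      by rewrite scalerDr scalerDl scalerA; rewrite -!addrA; congr (_ + _); rewrite addrCA.
    rewrite !f'E //; last exact: g.1.2.
    by rewrite g.2.1 //; ring.
  + move=> _ [s [t [Ss ->]]]; rewrite f'E //.
    have [t0|t0|->] := ltgtP t 0; last by rewrite mul0r addr0 scale0r addr0; exact: g.2.2.
    * have u0 : 0 < - t by rewrite oppr_gt0.
      have := hm _ (subspZ (- t)^-1 g.1 Ss); rewrite (goodZ _ g Ss) => h.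
      have e1 : `|s + t *: z| = `|- t| * `|(- t)^-1 *: s - z|.
        by rewrite -normrZ scalerBr scalerA divff ?gt_eqF // scale1r scaleNr opprK.
      rewrite ger0_norm ?ltW // in e1; rewrite e1.
      have k : (- t) * ((- t)^-1 * f s) = f s by rewrite mulrA divff ?gt_eqF // mul1r.
      have := ler_wpM2l (ltW u0) h; rewrite mulrBr k => h2; lra.
    * have := hp _ (subspZ t^-1 g.1 Ss); rewrite (goodZ _ g Ss) => h.
      have e1 : `|s + t *: z| = `|t| * `|t^-1 *: s + z|.
        by rewrite -normrZ scalerDr scalerA divff ?gt_eqF // scale1r.
      rewrite ger0_norm ?ltW // in e1; rewrite e1.
      have k : t * (t^-1 * f s) = f s by rewrite mulrA divff ?gt_eqF // mul1r.
      have := ler_wpM2l (ltW t0) h; rewrite mulrDr k => h2; lra.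
- by move=> s Ss; exists s, 0; rewrite scale0r addr0.
- by move=> s Ss; have := f'E s 0 Ss; rewrite scale0r addr0 mul0r addr0.
- by exists 0, 1; split; [exact: g.1.1|rewrite scale1r add0r].
- by have := f'E 0 1 g.1.1; rewrite scale1r add0r (good0 g) mul1r add0r.
Qed.


Lemma hahn_banach (z : X) : z != 0 ->
  exists phi : X -> R, [/\ forall a x y, phi (a *: x + y) = a * phi x + phi y,
     forall x, `|phi x| <= `|x| & phi z = `|z|].
Proof.
move=> z0.
pose P (p : set X * (X -> R)) := good p.1 p.2 /\ p.1 z /\ p.2 z = `|z|.
pose T := {p | P p}.
pose Rl (a b : T) := `[< (sval a).1 `<=` (sval b).1 /\
   forall x, (sval a).1 x -> (sval b).2 x = (sval a).2 x >].
have g0 : good [set 0] (fun _ => 0).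
  split; [split; [by []|by move=> a x y -> ->; rewrite scaler0 addr0]|split].
  + by move=> *; rewrite mulr0 addr0.
  + by move=> x _.
have [S1 [f1 [g1 _ _ S1z f1z]]] : exists S' f', [/\ good S' f', [set 0] `<=` S',
    (forall x, [set 0] x -> f' x = 0), S' z & f' z = `|z|].
  apply: ext1 => //.
  - by move=> h; have hz : z = 0 := h; move: z0; rewrite hz eqxx.
  - by move=> s h; have -> : s = 0 := h; rewrite !add0r.
  - move=> s h; have -> : s = 0 := h; rewrite !sub0r normrN.
    by rewrite lerNl (le_trans _ (normr_ge0 z)) // oppr0.
have t0 : T by exists (S1, f1).
have Rrefl t : Rl t t by apply/asboolP; split.
have Rtrans r s t : Rl r s -> Rl s t -> Rl r t.
  move=> /asboolP [rs1 rs2] /asboolP [st1 st2]; apply/asboolP; split.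
    exact: subset_trans st1.
  by move=> x rx; rewrite st2 ?rs2 //; exact: rs1.
have chain (A : set T) : total_on A (fun x y => Rl x y) -> exists t, forall s, A s -> Rl s t.
  move=> Atot; have [[a0 Aa0]|A0] := pselect (exists a, A a); last first.
    by exists t0 => s As; exfalso; apply: A0; exists s.
  pose U := [set x | exists t, A t /\ (sval t).1 x].
  pose fU x := xget 0 [set v | exists t, A t /\ (sval t).1 x /\ v = (sval t).2 x].
  have fUE t x : A t -> (sval t).1 x -> fU x = (sval t).2 x.
    move=> At tx.
    have [] : [set v | exists t, A t /\ (sval t).1 x /\ v = (sval t).2 x] (fU x).
      by apply: xgetPex; exists ((sval t).2 x), t.
    move=> t' [At' [t'x ->]].
    have [/asboolP [_ h]|/asboolP [_ h]] := Atot _ _ At At'; first by rewrite h.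
    by rewrite h.
  have both x y : U x -> U y -> exists t, [/\ A t, (sval t).1 x & (sval t).1 y].
    move=> [t1 [A1 x1]] [t2 [A2 y2]].
    have [/asboolP [h _]|/asboolP [h _]] := Atot _ _ A1 A2.
      by exists t2; split => //; exact: h.
    by exists t1; split => //; exact: h.
  have PU : P (U, fU).
    split; [split; [split|split]|split] => /=.
    - by exists a0; split => //; exact: (svalP a0).1.1.1.
    - move=> a x y Ux Uy; have [t [At tx ty]] := both x y Ux Uy.
      by exists t; split => //; apply: (svalP t).1.1.2.
    - move=> a x y Ux Uy; have [t [At tx ty]] := both x y Ux Uy.
      rewrite (fUE t) //; last exact: (svalP t).1.1.2.
      by rewrite (svalP t).1.2.1 // (fUE t) // (fUE t).
    - by move=> x [t [At tx]]; rewrite (fUE t) //; exact: (svalP t).1.2.2.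
    - by exists a0; split => //; exact: (svalP a0).2.1.
    - by rewrite (fUE a0) //; [exact: (svalP a0).2.2|exact: (svalP a0).2.1].
  exists (exist _ (U, fU) PU) => s As; apply/asboolP; split => /=.
    by move=> x sx; exists s.
  by move=> x sx; rewrite (fUE s).
have [[[S f] [gS [Sz fz]]] tmax] := ZL_preorder t0 Rrefl Rtrans chain.
have ST : forall x, S x.
  move=> x; apply: contrapT => nSx.
  have [c [hp hm]] := ext_c x gS.
  have [S' [f' [g' SS' ff' S'x _]]] := ext1 gS nSx hp hm.
  have P' : P (S', f') by split => //; split; [exact: SS'|rewrite /= ff'].
  have : Rl (exist _ (S, f) (conj gS (conj Sz fz))) (exist _ (S', f') P').
    by apply/asboolP; split.
  by move=> /tmax /asboolP [/= h _]; apply: nSx; exact: h.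
exists f; split => //.
- by move=> a x y; apply: gS.2.1.
- move=> x; rewrite ler_norml; apply/andP; split; last exact: gS.2.2.
  have := gS.2.2 (- x) (ST _); rewrite normrN -scaleN1r (goodZ _ gS (ST x)).
  by rewrite mulN1r lerNl.
Qed.

End HB.

Section Sqrt.
Variable R : realType.

Fixpoint sqa (n : nat) (t : R) : R :=
  if n is n'.+1 then sqa n' t + (t - sqa n' t * sqa n' t) / 2 else 0.

Lemma sqa_inv n a : 0 <= a <= 1 ->
  0 <= sqa n (a * a) <= a /\ (a - sqa n (a * a)) * (2 + n%:R * a) <= 2 * a.
Proof.
move=> /andP [a0 a1]; elim: n => [|n [/andP [p0 pa] IH]].
  by rewrite /= lexx a0 mul0r addr0 subr0 mulrC.
change (sqa n.+1 (a*a)) with (sqa n (a*a) + (a*a - sqa n (a*a) * sqa n (a*a))/2).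
set p := sqa n (a * a) in p0 pa IH *.
have e : a - (p + (a * a - p * p) / 2) = (a - p) * (1 - (a + p) / 2) by field.
have h1 : 0 <= (a - p) * (1 - (a + p) / 2) by apply: mulr_ge0; lra.
have h2 : 0 <= (a - p) * (a + p) by apply: mulr_ge0; lra.
split.
  apply/andP; split; last by lra.
  have : 0 <= (a * a - p * p) / 2 by rewrite divr_ge0 //; lra.
  lra.
rewrite e -natr1.
have h3 : 0 <= (a - p) * (a / 2) by apply: mulr_ge0; lra.
have h4 : (1 - (a + p) / 2) <= 1 - a / 2 by lra.
have h5 : (a - p) * (1 - (a + p) / 2) <= (a - p) * (1 - a / 2).
  by apply: ler_wpM2l => //; lra.
have n0 : 0 <= n%:R :> R by [].
have h6 : (1 - a / 2) * (2 + (n%:R + 1) * a) <= 2 + n%:R * a.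
  have : 0 <= (n%:R + 1) * a * a by apply: mulr_ge0 => //; apply: mulr_ge0 => //; lra.
  lra.
have h7 : 0 <= 2 + (n%:R + 1) * a by apply: addr_ge0 => //; apply: mulr_ge0 => //; lra.
have k1 := ler_wpM2r h7 h5.
have k2 : (a - p) * ((1 - a / 2) * (2 + (n%:R + 1) * a)) <= (a - p) * (2 + n%:R * a).
  by apply: ler_wpM2l => //; lra.
rewrite mulrA in k2.
have hn : n.+1%:R = n%:R + 1 :> R by rewrite natr1.
have h22 : (1 + 1 : R) = 2 by [].
rewrite hn !h22; lra.
Qed.

Lemma sqa_err n a : 0 <= a <= 1 -> n%:R * (a - sqa n (a * a)) <= 2 /\ 0 <= a - sqa n (a * a).
Proof.
move=> ha; have [/andP [p0 pa] h] := sqa_inv n ha.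
split; last by lra.
have [a0|a0] := eqVneq a 0.
  have hp : sqa n (a * a) = 0 by lra.
  by rewrite hp a0 subr0 mulr0.
have ap : 0 < a by rewrite lt0r a0; case/andP: ha.
rewrite -(ler_pM2r ap).
have n0 : 0 <= n%:R :> R by [].
have : 0 <= (a - sqa n (a * a)) * 2 by apply: mulr_ge0 => //; lra.
nra.
Qed.

End Sqrt.

Lemma cont_bnd (R : realType) (T : topologicalType) (K : set T) (u : T -> R) :
  compact K -> continuous u -> exists M, 0 < M /\ forall x, K x -> `|u x| <= M.
Proof.
move=> cK cu.
have cb := compact_bounded (continuous_compact (continuous_subspaceT cu) cK).
have [M [_ HM]] := cb.
exists (`|M| + 1); split; first by rewrite ltr_wpDl.
move=> x Kx; apply: (HM (`|M| + 1)); last by exists x.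
by rewrite (le_lt_trans (ler_norm M)) // ltrDl.
Qed.

Section Fold.
Variables (R : realType) (T : eqType).

Definition foldf (op : R -> R -> R) (g : T -> T -> R) (s : seq T) (init : T -> R) :=
  foldr (fun y acc z => op (g y z) (acc z)) init s.

Lemma foldf_P (P : (T -> R) -> Prop) op g s init :
  (forall u v, P u -> P v -> P (fun z => op (u z) (v z))) ->
  P init -> (forall y, y \in s -> P (g y)) -> P (foldf op g s init).
Proof.
move=> Pop Pi; elim: s => [|y s IH] //= Hs.
apply: Pop; first by apply: Hs; rewrite mem_head.
by apply: IH => y' ys; apply: Hs; rewrite in_cons ys orbT.
Qed.

Lemma foldf_min_le g s init z y : y \in s -> foldf Num.min g s init z <= g y z.
Proof.
elim: s => [|y' s IH] //=; rewrite in_cons => /orP [/eqP ->|ys].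
  by rewrite ge_min lexx.
by rewrite ge_min IH ?orbT.
Qed.

Lemma foldf_max_ge g s init z y : y \in s -> g y z <= foldf Num.max g s init z.
Proof.
elim: s => [|y' s IH] //=; rewrite in_cons => /orP [/eqP ->|ys].
  by rewrite le_max lexx.
by rewrite le_max IH ?orbT.
Qed.

Lemma foldf_Pt (Q : R -> Prop) op g s init z :
  (forall a b, Q a -> Q b -> Q (op a b)) ->
  Q (init z) -> (forall y, y \in s -> Q (g y z)) -> Q (foldf op g s init z).
Proof.
move=> Qop Qi; elim: s => [|y s IH] //= Hs.
apply: Qop; first by apply: Hs; rewrite mem_head.
by apply: IH => y' ys; apply: Hs; rewrite in_cons ys orbT.
Qed.

End Fold.

Section SW.
Variables (R : realType) (T : ptopologicalType) (K : set T) (A : set (T -> R)).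
Hypothesis cK : compact K.
Hypothesis Acst : forall c, A (fun _ => c).
Hypothesis AD : forall u v, A u -> A v -> A (fun x => u x + v x).
Hypothesis AM : forall u v, A u -> A v -> A (fun x => u x * v x).
Hypothesis Acont : forall u, A u -> continuous u.
Hypothesis Aclosed : forall u, continuous u ->
  (forall e, 0 < e -> exists v, A v /\ forall x, K x -> `|u x - v x| <= e) -> A u.
Hypothesis Asep : forall x y, K x -> K y -> x <> y -> exists u, A u /\ u x <> u y.

Lemma AZ c u : A u -> A (fun x => c * u x).
Proof. by move=> Au; apply: AM. Qed.

Lemma AB u v : A u -> A v -> A (fun x => u x - v x).
Proof.
move=> Au Av; have -> : (fun x => u x - v x) = (fun x => u x + (-1) * v x).
  by apply/funext => x; rewrite mulN1r.
by apply: AD => //; apply: AZ.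
Qed.

Lemma Aabs u : A u -> A (fun x => `|u x|).
Proof.
move=> Au; have [M [M0 HM]] := cont_bnd cK (Acont Au).
pose w x := (M^-1 * u x) * (M^-1 * u x).
have Aw : A w by apply: AM; apply: AZ.
have Aq n : A (fun x => sqa n (w x)).
  elim: n => [|n IH]; first exact: Acst.
  have -> : (fun x => sqa n.+1 (w x)) =
     (fun x => sqa n (w x) + 2^-1 * (w x - sqa n (w x) * sqa n (w x))).
    by apply/funext => x /=; rewrite mulrC.
  by apply: AD => //; apply: AZ; apply: AB => //; apply: AM.
apply: Aclosed.
  move=> x; apply: (@continuous_comp _ _ _ u (@Num.Def.normr _ R) x).
    exact: Acont.
  exact: norm_continuous.
move=> e e0.
pose n := (Num.Def.trunc (2 * M / e)).+1.
exists (fun x => M * sqa n (w x)); split; first exact: AZ.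
move=> x Kx.
have ha : 0 <= M^-1 * `|u x| <= 1.
  apply/andP; split; first by rewrite mulr_ge0 // invr_ge0 ltW.
  by rewrite mulrC ler_pdivrMr // mul1r; exact: HM.
have wE : w x = (M^-1 * `|u x|) * (M^-1 * `|u x|).
  by rewrite /w mulrACA [RHS]mulrACA -normrM ger0_norm // -expr2 sqr_ge0.
have [h1 h2] := sqa_err n ha.
rewrite wE.
set p := sqa n _ in h1 h2 *.
have -> : `|u x| - M * p = M * (M^-1 * `|u x| - p).
  by rewrite mulrBr mulrA divff ?gt_eqF // mul1r.
rewrite normrM ger0_norm ?ltW // ger0_norm //.
have hn : 2 * M / e < n%:R by apply: truncnS_gt.
have n0 : 0 < n%:R :> R by rewrite ltr0n.
rewrite ltr_pdivrMr // in hn.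
set d := M^-1 * `|u x| - p in h1 h2 *.
have k : M * (n%:R * d) <= M * 2 by rewrite ler_wpM2l // ltW.
nra.
Qed.

Lemma Amax u v : A u -> A v -> A (fun x => Num.max (u x) (v x)).
Proof.
move=> Au Av.
have -> : (fun x => Num.max (u x) (v x)) =
    (fun x => 2^-1 * ((u x + v x) + `|u x - v x|)).
  apply/funext => x /=; have [uv|vu] := leP (u x) (v x).
    by rewrite ler0_norm ?subr_le0 //; field.
  by rewrite gtr0_norm ?subr_gt0 //; field.
by apply: AZ; apply: AD; [apply: AD|apply: Aabs; apply: AB].
Qed.

Lemma Amin u v : A u -> A v -> A (fun x => Num.min (u x) (v x)).
Proof.
move=> Au Av.
have -> : (fun x => Num.min (u x) (v x)) =
    (fun x => 2^-1 * ((u x + v x) - `|u x - v x|)).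
  apply/funext => x /=; have [uv|vu] := leP (u x) (v x).
    by rewrite ler0_norm ?subr_le0 //; field.
  by rewrite gtr0_norm ?subr_gt0 //; field.
by apply: AZ; apply: AB; [apply: AD|apply: Aabs; apply: AB].
Qed.

Lemma Ainterp (h : T -> R) x y : K x -> K y ->
  exists u, [/\ A u, u x = h x & u y = h y].
Proof.
move=> Kx Ky; have [->|nxy] := pselect (x = y).
  by exists (fun _ => h y); split.
have [v [Av vxy]] := Asep Kx Ky nxy.
have d0 : v y - v x != 0 by rewrite subr_eq0; apply/eqP => e; apply: vxy.
exists (fun z => h x + ((h y - h x) / (v y - v x)) * (v z - v x)); split.
- by apply: AD => //; apply: AZ; apply: AB.
- by rewrite subrr mulr0 addr0.
- by rewrite divfK // addrC subrK.
Qed.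

Theorem stone_weierstrass (h : T -> R) : continuous h -> A h.
Proof.
move=> ch; apply: Aclosed => // e e0.
have [[x0 Kx0]|K0] := pselect (exists x, K x); last first.
  by exists (fun _ => 0); split => // x Kx; exfalso; apply: K0; exists x.
have cKc := cK; rewrite compact_cover in cKc.
have opn (f g : T -> R) : continuous f -> continuous g ->
    open [set z | f z - g z < e].
  move=> cf cg.
  have -> : [set z | f z - g z < e] = (f - g) @^-1` [set r | r < e] by [].
  apply: open_comp; last exact: open_lt.
  by move=> z _; apply: continuousB; [exact: cf|exact: cg].
have step1 x : K x -> exists w, [/\ A w, w x = h x & forall z, K z -> w z < h z + e].
  move=> Kx.
  have : forall y, exists u, K y -> [/\ A u, u x = h x & u y = h y].
    move=> y; have [Ky|nKy] := pselect (K y).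
      by have [u Hu] := Ainterp h Kx Ky; exists u.
    by exists (fun _ => 0).
  move=> /choice [uf Huf].
  have [D' D'K cov] : finite_subset_cover K (fun y => [set z | uf y z - h z < e]) K.
    apply: cKc.
      by move=> y Ky; apply: opn => //; apply: Acont; have [] := Huf y Ky.
    move=> z Kz; exists z => //=; have [_ _ ->] := Huf z Kz; by rewrite subrr.
  have D'K' y : y \in D' -> K y by move=> /D'K; rewrite in_setE.
  exists (foldf Num.min uf D' (uf x)); split.
  - apply: foldf_P; first exact: Amin.
      by have [] := Huf x Kx.
    by move=> y /D'K' Ky; have [] := Huf y Ky.
  - apply: (@foldf_Pt _ _ (fun r => r = h x)).
    + by move=> a b -> ->; rewrite minxx.
    + by have [] := Huf x Kx.
    + by move=> y /D'K' Ky; have [] := Huf y Ky.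
  - move=> z Kz; have [y /= yD' hy] := cov z Kz.
    apply: (le_lt_trans (foldf_min_le _ _ _ yD')); lra.
have : forall x, exists w, K x -> [/\ A w, w x = h x & forall z, K z -> w z < h z + e].
  move=> x; have [Kx|nKx] := pselect (K x).
    by have [w Hw] := step1 x Kx; exists w.
  by exists (fun _ => 0).
move=> /choice [wf Hwf].
have [D2 D2K cov] : finite_subset_cover K (fun x => [set z | h z - wf x z < e]) K.
  apply: cKc.
    by move=> x Kx; apply: opn => //; apply: Acont; have [] := Hwf x Kx.
  move=> z Kz; exists z => //=; have [_ -> _] := Hwf z Kz; by rewrite subrr.
have D2K' y : y \in D2 -> K y by move=> /D2K; rewrite in_setE.
exists (foldf Num.max wf D2 (wf x0)); split.
  apply: foldf_P; first exact: Amax.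
    by have [] := Hwf x0 Kx0.
  by move=> y /D2K' Ky; have [] := Hwf y Ky.
move=> z Kz.
have hi : foldf Num.max wf D2 (wf x0) z < h z + e.
  apply: (@foldf_Pt _ _ (fun r => r < h z + e)).
  + by move=> a b ha hb; rewrite gt_max ha hb.
  + by have [_ _ ->] := Hwf x0 Kx0.
  + by move=> y /D2K' Ky; have [_ _ ->] := Hwf y Ky.
have [y /= yD2 hy] := cov z Kz.
have lo := foldf_max_ge wf (wf x0) z yD2.
rewrite ler_norml; apply/andP; split; lra.
Qed.

End SW.

Section Span.
Variables (R : realType) (Y : Type) (S : set (Y -> R)).

Lemma in_span0 : in_span S (fun _ => 0).
Proof.
exists 0%N, (fun _ => 0), (fun _ _ => 0); split; first by case.
by apply/funext => y; rewrite big_ord0.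
Qed.

Lemma in_span_gen g : S g -> in_span S g.
Proof.
move=> Sg; exists 1%N, (fun _ => 1), (fun _ => g); split => //.
by apply/funext => y; rewrite big_ord1 mul1r.
Qed.

Lemma in_span_lin c s1 s2 : in_span S s1 -> in_span S s2 ->
  in_span S (fun y => c * s1 y + s2 y).
Proof.
move=> [n1 [c1 [g1 [Sg1 ->]]]] [n2 [c2 [g2 [Sg2 ->]]]].
exists (n1 + n2)%N,
  (fun i => match fintype.split i with inl j => c * c1 j | inr k => c2 k end),
  (fun i => match fintype.split i with inl j => g1 j | inr k => g2 k end); split.
  by move=> i; case: (fintype.split i).
apply/funext => y; rewrite big_split_ord /= mulr_sumr.
congr (_ + _); apply: eq_bigr => i _.
  have -> : fintype.split (lshift n2 i) = inl i := unsplitK (inl i).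
  by rewrite mulrA.
by have -> : fintype.split (rshift n1 i) = inr i := unsplitK (inr i).
Qed.

End Span.

Lemma in_span_comp (R : realType) (X : Type) (G : set (R -> R)) (F : set (X -> R)) s f :
  in_span G s -> F f -> in_span [set g \o f | g in G & f in F] (s \o f).
Proof.
move=> [n [c [g [Sg ->]]]] Ff; exists n, c, (fun i => g i \o f); split => //.
by move=> i; exists (g i) => //; exists f.
Qed.

Section Ev.
Variables (R : realType) (X : normedModType R).

Fixpoint ev (l : seq (R * (X -> R))) (x : X) : R :=
  if l is p :: l' then p.1 * expR (p.2 x) + ev l' x else 0.
Fixpoint duals (l : seq (R * (X -> R))) : Prop :=
  if l is p :: l' then is_dual p.2 /\ duals l' else True.

Lemma ev_cat l1 l2 x : ev (l1 ++ l2) x = ev l1 x + ev l2 x.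
Proof. by elim: l1 => [|p l IH] /=; rewrite ?add0r // IH addrA. Qed.
Lemma duals_cat l1 l2 : duals l1 -> duals l2 -> duals (l1 ++ l2).
Proof. by elim: l1 => [|p l IH] //= [? ?] ?; split => //; apply: IH. Qed.

Definition mul1 (p : R * (X -> R)) (l : seq (R * (X -> R))) :=
  map (fun q => (p.1 * q.1, fun x => p.2 x + q.2 x)) l.
Fixpoint mull (l1 l2 : seq (R * (X -> R))) :=
  if l1 is p :: l' then mul1 p l2 ++ mull l' l2 else [::].

Lemma ev_mul1 p l x : ev (mul1 p l) x = p.1 * expR (p.2 x) * ev l x.
Proof.
elim: l => [|q l IH] /=; first by rewrite mulr0.
by rewrite IH expRD; ring.
Qed.
Lemma ev_mull l1 l2 x : ev (mull l1 l2) x = ev l1 x * ev l2 x.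
Proof. elim: l1 => [|p l IH] /=; first by rewrite mul0r. by rewrite ev_cat ev_mul1 IH mulrDl. Qed.

Lemma dual0f : is_dual (fun _ : X => (0 : R)).
Proof. by split; [move=> *; rewrite mulr0 addr0|exists 0 => x; rewrite normr0 mul0r]. Qed.

Lemma dual_add f g : is_dual f -> is_dual g -> is_dual (fun x : X => f x + g x).
Proof.
move=> fd gd; have := dual_comb 1 1 fd gd.
by have -> : (fun x => 1 * f x + 1 * g x) = (fun x => f x + g x) by apply/funext => x; rewrite !mul1r.
Qed.

Lemma duals_mull l1 l2 : duals l1 -> duals l2 -> duals (mull l1 l2).
Proof.
move=> d1 d2; elim: l1 d1 => [|p l IH] //= [pd ld]; apply: duals_cat; last exact: IH.
clear IH; elim: l2 d2 => [|q l2 IH2] //= [qd d2]; split; [exact: dual_add|exact: IH2].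
Qed.

Lemma ev_cont l : duals l -> continuous (ev l).
Proof.
elim: l => [|p l IH] /= => [_|[pd ld]] x.
  exact: cst_continuous.
apply: (@continuousD _ _ _ (fun x => p.1 * expR (p.2 x)) (ev l) x); last exact: IH.
apply: (@continuousM _ _ (fun _ => p.1) (fun x => expR (p.2 x)) x); first exact: cst_continuous.
apply: (@continuous_comp _ _ _ p.2 expR x); first exact: dual_cont.
exact: continuous_expR.
Qed.

End Ev.

Lemma expR_sub1 (R : realType) (t : R) : `|expR t - 1| <= `|t| * expR `|t|.
Proof.
have [t0|t0] := leP 0 t.
  rewrite !ger0_norm //; last by rewrite subr_ge0 -expR0 ler_expR.
  have h1 := expR_ge1Dx (- t).
  have h2 : expR t * expR (- t) = 1 by rewrite -expRD subrr expR0.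
  have h3 : 0 <= expR t by apply: ltW; apply: expR_gt0.
  have : expR t * (1 - t) <= expR t * expR (- t).
    by apply: ler_wpM2l => //; lra.
  rewrite h2; nra.
rewrite ltr0_norm ?subr_lt0 -?expR0 ?ltr_expR // ltr0_norm //.
have h1 := expR_ge1Dx t.
have h2 : 1 <= expR (- t) by rewrite -expR0 ler_expR; lra.
have : - t * 1 <= - t * expR (- t) by apply: ler_wpM2l => //; lra.
rewrite expR0; lra.
Qed.

Lemma expR_lip (R : realType) (a b L eta : R) : `|a| <= L -> `|a - b| <= eta -> eta <= 1 ->
  `|expR a - expR b| <= expR (L + 1) * eta.
Proof.
move=> aL abe e1.
have -> : expR a - expR b = - expR a * (expR (b - a) - 1).
  by rewrite expRB; field; rewrite gt_eqF // expR_gt0.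
rewrite normrM normrN (gtr0_norm (expR_gt0 _)).
have h1 := expR_sub1 (b - a).
have hba : `|b - a| <= eta by rewrite distrC.
have h2 : expR `|b - a| <= expR 1 by rewrite ler_expR; lra.
have h3 : expR a <= expR L by rewrite ler_expR; move: aL; rewrite ler_norml => /andP [].
have h4 : `|b - a| * expR `|b - a| <= eta * expR 1.
  apply: ler_pM => //; exact: ltW (expR_gt0 _).
rewrite [expR (L + 1)]expRD.
have h5 := le_trans h1 h4.
have p1 := expR_gt0 a; have p2 := expR_gt0 1; have p3 := expR_gt0 L.
have e0 : 0 <= eta by apply: le_trans abe.
have k1 : expR a * `|expR (b - a) - 1| <= expR a * (eta * expR 1).
  by apply: ler_wpM2l => //; exact: ltW.
have k2 : expR a * (eta * expR 1) <= expR L * (eta * expR 1).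
  by apply: ler_wpM2r => //; apply: mulr_ge0 => //; exact: ltW.
rewrite -mulrA [expR 1 * _]mulrC; exact: le_trans k1 k2.
Qed.

Section Main.
Variables (R : realType) (X : normedModType R) (G : set (R -> R)) (F : set (X -> R)).
Hypothesis hX : exists x : X, x != 0.
Hypothesis hG : fundamental G.
Hypothesis hF : forall f, F f -> is_dual f.
Hypothesis hD : forall phi : X -> R, is_dual phi -> opnorm phi = 1 ->
     forall e : R, 0 < e ->
       exists f, F f /\ f <> (fun _ => 0) /\
         opnorm (fun x => f x / opnorm f - phi x) < e.
Variable K : set X.
Hypothesis cK : compact K.

Let Sfun := [set g \o f | g in G & f in F].

Definition Ctar (u : X -> R) := forall e, 0 < e ->
  exists s, in_span Sfun s /\ forall x, K x -> `|u x - s x| <= e.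

Lemma Ctar_lin c u v : Ctar u -> Ctar v -> Ctar (fun x => c * u x + v x).
Proof.
move=> Cu Cv e e0.
have c1 : 0 < `|c| + 1 by rewrite ltr_wpDl.
have e2 : 0 < e / 2 by rewrite divr_gt0.
have [su [Su hu]] := Cu (e / 2 / (`|c| + 1)) (divr_gt0 e2 c1).
have [sv [Sv hv]] := Cv (e / 2) e2.
exists (fun x => c * su x + sv x); split; first exact: in_span_lin.
move=> x Kx.
have -> : c * u x + v x - (c * su x + sv x) = c * (u x - su x) + (v x - sv x) by ring.
apply: (le_trans (ler_normD _ _)); rewrite normrM.
have k1 : `|c| * `|u x - su x| <= (`|c| + 1) * (e / 2 / (`|c| + 1)).
  by apply: ler_pM => //; [rewrite lerDl|exact: hu].
rewrite [X in _ <= X]mulrC divfK ?gt_eqF // in k1.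
have := hv x Kx; lra.
Qed.

Lemma Ctar_approx u : (forall e, 0 < e -> exists v, Ctar v /\ forall x, K x -> `|u x - v x| <= e) ->
  Ctar u.
Proof.
move=> h e e0; have e2 : 0 < e / 2 by rewrite divr_gt0.
have [v [Cv hv]] := h (e / 2) e2.
have [s [Ss hs]] := Cv (e / 2) e2.
exists s; split => // x Kx.
have -> : u x - s x = (u x - v x) + (v x - s x) by ring.
apply: (le_trans (ler_normD _ _)); have := hv x Kx; have := hs x Kx; lra.
Qed.

Lemma K_bound : exists B, 0 < B /\ forall x, K x -> `|x| <= B.
Proof.
have [B [B0 HB]] := cont_bnd cK (@norm_continuous _ X).
by exists B; split => // x Kx; have := HB x Kx; rewrite normr_id.
Qed.

Lemma dual_scale (psi : X -> R) n : is_dual psi -> is_dual (fun x => psi x / n).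
Proof.
move=> pd; have := dual_comb n^-1 0 pd pd.
have -> : (fun x => n^-1 * psi x + 0 * psi x) = (fun x => psi x / n).
  by apply/funext => x; rewrite mul0r addr0 mulrC.
by [].
Qed.

Lemma F_nonempty : exists f, F f.
Proof.
have [x0 x00] := hX.
have [phi [lin bnd phix]] := hahn_banach x00.
have pd : is_dual phi by split => //; exists 1 => x; rewrite mul1r.
have n1 : opnorm phi = 1.
  apply/eqP; rewrite eq_le; apply/andP; split.
    by apply: opnorm_le => x x1; apply: le_trans x1.
  have nx : 0 < `|x0| by rewrite normr_gt0.
  have := opnorm_bound x0 pd; rewrite phix ger0_norm // -ler_pdivrMr // divff ?gt_eqF //.
have [f [Ff _]] := hD pd n1 ltr01; by exists f.
Qed.

Lemma approx_dual (psi : X -> R) : is_dual psi -> forall eta, 0 < eta ->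
  exists f c, F f /\ forall x, K x -> `|psi x - c * f x| <= eta.
Proof.
move=> pd eta eta0.
have [B [B0 HB]] := K_bound.
have [[x1 px1]|psi0] := pselect (exists x, psi x != 0); last first.
  have [f Ff] := F_nonempty; exists f, 0; split => // x Kx.
  have -> : psi x = 0 by apply: contrapT => h; apply: psi0; exists x; apply/eqP.
  by rewrite mul0r subr0 normr0 ltW.
set n := opnorm psi.
have n0 : 0 < n.
  rewrite lt0r opnorm_ge0 // andbT; apply/eqP => n0.
  have := opnorm_bound x1 pd; rewrite -/n n0 mul0r normr_le0.
  by apply/negP.
pose phi x := psi x / n.
have phid : is_dual phi := dual_scale n pd.
have phi1 : opnorm phi = 1.
  apply/eqP; rewrite eq_le; apply/andP; split.
    have ni : `|n^-1| = n^-1 by rewrite ger0_norm // invr_ge0 ltW.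
    apply: opnorm_le => x xx1; rewrite /phi normrM ni.
    rewrite ler_pdivrMr // mul1r; apply: (le_trans (opnorm_bound x pd)).
    by rewrite -/n -[leRHS]mulr1 ler_wpM2l // ltW.
  have : n <= n * opnorm phi.
    apply: opnorm_le => x xx1.
    have -> : psi x = n * phi x by rewrite /phi mulrC divfK ?gt_eqF.
    rewrite normrM (ger0_norm (ltW n0)); apply: ler_wpM2l; first exact: ltW.
    exact: opnorm_ub.
  by rewrite -{1}[n]mulr1 ler_pM2l.
have e0 : 0 < eta / (n * B) by rewrite divr_gt0 // mulr_gt0.
have [f [Ff [fn0 hf]]] := hD phid phi1 e0.
have fd := hF Ff.
set m := opnorm f in hf.
have [x2 fx2] : exists x, f x != 0.
  apply: contrapT => h; apply: fn0; apply/funext => x.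
  by apply: contrapT => hx; apply: h; exists x; apply/eqP.
have m0 : 0 < m.
  rewrite lt0r opnorm_ge0 // andbT; apply/eqP => m0.
  have := opnorm_bound x2 fd; rewrite -/m m0 mul0r normr_le0.
  by apply/negP.
pose del x := f x / m - phi x.
have deld : is_dual del.
  have := dual_comb m^-1 (-1) fd phid.
  have -> : (fun x => m^-1 * f x + -1 * phi x) = del.
    by apply/funext => x; rewrite /del mulN1r mulrC.
  by [].
exists f, (n / m); split => // x Kx.
have -> : psi x - n / m * f x = - n * del x.
  by rewrite /del /phi; field; rewrite !gt_eqF.
rewrite normrM normrN (ger0_norm (ltW n0)).
have k1 := opnorm_bound x deld.
have k2 : opnorm del * `|x| <= eta / (n * B) * B.
  apply: ler_pM; [exact: opnorm_ge0|exact: normr_ge0|exact: ltW|exact: HB].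
have k3 : n * (eta / (n * B) * B) = eta by field; rewrite !gt_eqF.
rewrite -k3; apply: ler_wpM2l; first exact: ltW.
exact: le_trans k1 k2.
Qed.

Lemma Ctar_exp (psi : X -> R) : is_dual psi -> Ctar (fun x => expR (psi x)).
Proof.
move=> pd e e0.
have [B [B0 HB]] := K_bound.
set L := opnorm psi * B.
have hL x : K x -> `|psi x| <= L.
  move=> Kx; apply: (le_trans (opnorm_bound x pd)).
  by apply: ler_wpM2l; [exact: opnorm_ge0|exact: HB].
have E0 := expR_gt0 (L + 1).
pose eta := Num.min 1 (e / 2 / expR (L + 1)).
have eta0 : 0 < eta by rewrite lt_min ltr01 /= !divr_gt0.
have [f [c [Ff hf]]] := approx_dual pd eta0.
have fd := hF Ff.
have cfK : compact [set f x | x in K].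
  by apply: continuous_compact => //; apply: continuous_subspaceT; exact: dual_cont.
have e2 : 0 < e / 2 by rewrite divr_gt0.
have ch2 : continuous (fun t : R => expR (c * t)).
  move=> t; apply: (@continuous_comp _ _ _ (fun t => c * t) expR t).
    by apply: (@continuousM _ _ (fun _ => c) id t); [exact: cst_continuous|exact: cvg_id].
  exact: continuous_expR.
have [s [Ss [d [de hs]]]] := hG.2 _ _ _ cfK ch2 e2.
exists (s \o f); split; first exact: in_span_comp.
move=> x Kx.
have k1 : `|expR (psi x) - expR (c * f x)| <= e / 2.
  have eta1 : eta <= 1 by rewrite ge_min lexx.
  have eta2 : eta <= e / 2 / expR (L + 1) by rewrite ge_min lexx orbT.
  apply: (le_trans (expR_lip (hL x Kx) (hf x Kx) eta1)).
  have := ler_wpM2l (ltW E0) eta2; rewrite [X in _ <= X]mulrC divfK ?gt_eqF //.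
have k2 := hs (f x) (ex_intro2 _ _ x Kx erefl).
have -> : expR (psi x) - (s \o f) x = (expR (psi x) - expR (c * f x)) + (expR (c * f x) - s (f x)) by rewrite /=; ring.
apply: (le_trans (ler_normD _ _)); lra.
Qed.

Lemma Ctar_ev l : duals l -> Ctar (ev l).
Proof.
elim: l => [|p l IH] /=.
  move=> _ e e0; exists (fun _ => 0); split; first exact: in_span0.
  by move=> x _; rewrite subrr normr0 ltW.
move=> [pd ld]; apply: Ctar_lin; [exact: Ctar_exp|exact: IH].
Qed.

Definition Aset := [set u : X -> R | continuous u /\ forall e, 0 < e ->
  exists l, duals l /\ forall x, K x -> `|u x - ev l x| <= e].

Lemma Aset_Ctar u : Aset u -> Ctar u.
Proof.
move=> [_ hu]; apply: Ctar_approx => e e0.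
have [l [dl hl]] := hu e e0; exists (ev l); split => //; exact: Ctar_ev.
Qed.

End Main.

Lemma Aset_all (R : realType) (X : normedModType R) (K : set X) (h : X -> R) :
  compact K -> continuous h -> Aset K h.
Proof.
move=> cK ch.
apply: (@stone_weierstrass R X K (Aset K)) => //.
- move=> c; split; first exact: cst_continuous.
  move=> e e0; exists [:: (c, fun _ => 0)]; split; first by split => //; exact: dual0f.
  by move=> x _ /=; rewrite expR0 mulr1 addr0 subrr normr0 ltW.
- move=> u v [cu hu] [cv hv]; split.
    by move=> x; apply: (@continuousD _ _ _ u v x); [exact: cu|exact: cv].
  move=> e e0; have e2 : 0 < e / 2 by rewrite divr_gt0.
  have [l1 [d1 h1]] := hu _ e2; have [l2 [d2 h2]] := hv _ e2.
  exists (l1 ++ l2); split; first exact: duals_cat.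
  move=> x Kx; rewrite ev_cat.
  have -> : u x + v x - (ev l1 x + ev l2 x) = (u x - ev l1 x) + (v x - ev l2 x) by ring.
  apply: (le_trans (ler_normD _ _)); have := h1 x Kx; have := h2 x Kx; lra.
- move=> u v [cu hu] [cv hv]; split.
    by move=> x; apply: (@continuousM _ _ u v x); [exact: cu|exact: cv].
  move=> e e0.
  have [Mu [Mu0 HMu]] := cont_bnd cK cu.
  have [Mv [Mv0 HMv]] := cont_bnd cK cv.
  pose del := Num.min 1 (e / (Mu + Mv + 1)).
  have del0 : 0 < del by rewrite lt_min ltr01 /= divr_gt0 // ltr_wpDl // ltW // addr_gt0.
  have del1 : del <= 1 by rewrite ge_min lexx.
  have del2 : del <= e / (Mu + Mv + 1) by rewrite ge_min lexx orbT.
  have [l1 [d1 h1]] := hu _ del0; have [l2 [d2 h2]] := hv _ del0.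
  exists (mull l1 l2); split; first exact: duals_mull.
  move=> x Kx; rewrite ev_mull.
  set a := ev l1 x; set b := ev l2 x.
  have -> : u x * v x - a * b = u x * (v x - b) + b * (u x - a) by ring.
  apply: (le_trans (ler_normD _ _)); rewrite !normrM.
  have hb : `|b| <= Mv + 1.
    have -> : b = v x - (v x - b) by ring.
    apply: (le_trans (ler_normB _ _)); apply: lerD; [exact: HMv|exact: le_trans (h2 x Kx) del1].
  have k1 : `|u x| * `|v x - b| <= Mu * del by apply: ler_pM => //; [exact: HMu|exact: h2].
  have k2 : `|b| * `|u x - a| <= (Mv + 1) * del by apply: ler_pM => //; exact: h1.
  have k3 : (Mu + Mv + 1) * del <= e.
    by rewrite mulrC -ler_pdivlMr // ?addr_gt0 // ?ltr_wpDl // ltW.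
  lra.
- by move=> u [].
- move=> u cu hu; split => // e e0; have e2 : 0 < e / 2 by rewrite divr_gt0.
  have [v [[_ hv] huv]] := hu _ e2; have [l [dl hl]] := hv _ e2.
  exists l; split => // x Kx.
  have -> : u x - ev l x = (u x - v x) + (v x - ev l x) by ring.
  apply: (le_trans (ler_normD _ _)); have := huv x Kx; have := hl x Kx; lra.
- move=> x y Kx Ky nxy.
  have z0 : x - y != 0 by rewrite subr_eq0; apply/eqP.
  have [phi [lin bnd phiz]] := hahn_banach z0.
  have pd : is_dual phi by split => //; exists 1 => z; rewrite mul1r.
  exists (fun z => expR (phi z)); split.
    split.
      move=> z; apply: (@continuous_comp _ _ _ phi expR z); first exact: dual_cont.
      exact: continuous_expR.
    move=> e e0; exists [:: (1, phi)]; split => //.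
    by move=> z _ /=; rewrite mul1r addr0 subrr normr0 ltW.
  move=> /expR_inj e; move: phiz; rewrite (dualB _ _ pd) e subrr => /esym /eqP.
  by rewrite normr_eq0 (negbTE z0).
Qed.

Unset Implicit Arguments.

Theorem theorem4p3p3 (R : realType) (X : normedModType R)
  (G : set (R -> R)) (F : set (X -> R)) :
  (exists x : X, x != 0) ->
  fundamental G ->
  (forall f, F f -> is_dual f) ->
  (forall phi : X -> R, is_dual phi -> opnorm phi = 1 ->
     forall e : R, 0 < e ->
       exists f, F f /\ f <> (fun _ => 0) /\
         opnorm (fun x => f x / opnorm f - phi x) < e) ->
  fundamental [set g \o f | g in G & f in F].
Proof.
move=> hX hG hF hD; split.
  move=> _ [g Gg [f Ff <-]] x.
  have h1 : {for x, continuous f} := @dual_cont _ _ f (hF _ Ff) x. have h2 : {for f x, continuous g} := hG.1 g Gg (f x). exact: continuous_comp h1 h2.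
move=> K h eps cK ch eps0.
have e2 : 0 < eps / 2 by rewrite divr_gt0.
have [s [Ss hs]] := Aset_Ctar hX hG hF hD cK (Aset_all cK ch) e2.
exists s; split => //; exists (eps / 2); split => //.
by rewrite ltr_pdivrMr // ltr_pMr // ltr1n.
Qed.
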